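(* Let $\lambda>0$, $0<\varepsilon_g<1$, $f$ twice continuously differentiable satisfying $f(y)\le f(x)+\nabla f(x)^\top(y-x)+\frac12(y-x)^\top\nabla^2f(x)(y-x)+\frac{L_H}6\|y-x\|^3$, and $\varphi=f+\lambda\|\cdot\|_1$. Let $x^k\in\mathbb{R}^n$, $I^{k\varepsilon}_+=\{i:x^k_i>\varepsilon_g^{1/2}\}$, $I^{k\varepsilon}_-=\{i:x^k_i<-\varepsilon_g^{1/2}\}$, $I^{k\varepsilon}_{\neq0}=I^{k\varepsilon}_+\cup I^{k\varepsilon}_-$, $I^{k\varepsilon}_0=\{i:|x^k_i|\le\varepsilon_g^{1/2}\}$, and let $d^k\in\mathbb{R}^n$ satisfy $d^k_{I^{k\varepsilon}_0}=0$ (as in a Newton-CG step of PGN2CM). Let $H^k_{\neq0\varepsilon}=(\nabla^2f(x^k))_{I^{k\varepsilon}_{\neq0}}$, $g^k_{\neq0\varepsilon}=g^\varepsilon(x^k)_{I^{k\varepsilon}_{\neq0}}$, $d^k_{\neq0\varepsilon}=d^k_{I^{k\varepsilon}_{\neq0}}$, and $t^k_+=\min_{i\in J^k_+}\{-x^k_i/d^k_i\}$, $t^k_-=\min_{i\in J^k_-}\{-x^k_i/d^k_i\}$ with $J^k_+=\{i\in I^{k\varepsilon}_+:d^k_i<0\}$, $J^k_-=\{i\in I^{k\varepsilon}_-:d^k_i>0\}$ (each $+\infty$ if the set is empty). Then for any $t\in(0,\min\{t^k_+,t^k_-\}]$, $$\varphi(x^k+td^k)\le\varphi(x^k)+t(g^k_{\neq0\varepsilon})^\top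 d^k_{\neq0\varepsilon}+\frac12t^2(d^k_{\neq0\varepsilon})^\top H^k_{\neq0\varepsilon}d^k_{\neq0\varepsilon}+\frac{L_H}6t^3\|d^k_{\neq0\varepsilon}\|^3.$$
   Context: $g^\varepsilon(x)$: $g^\varepsilon_i=(\nabla f(x))_i+\lambda$ if $x_i>\varepsilon_g^{1/2}$, $(\nabla f(x))_i-\lambda$ if $x_i<-\varepsilon_g^{1/2}$, and $(\nabla f(x))_i-\min\{\max\{-\lambda-\varepsilon_g^{3/4},(\nabla f(x))_i\},\lambda+\varepsilon_g^{3/4}\}$ if $|x_i|\le\varepsilon_g^{1/2}$. $A_J$ denotes principal submatrix/subvector on index set $J$. In the paper the cubic bound on $f$ holds with constant $L_H$ on the level set $\{x:\varphi(x)\le\varphi(x^0)\}$. *)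

(* Defs.v *)
From HB Require Import structures.
From mathcomp Require Import all_boot all_order all_algebra.
From mathcomp Require Import all_classical all_reals all_analysis.
Set Implicit Arguments. Unset Strict Implicit. Unset Printing Implicit Defensive.
Import Order.TTheory GRing.Theory Num.Theory.
Import numFieldNormedType.Exports.
Local Open Scope ring_scope.

Section Defs.
Context {R : realType} {n : nat}.

Definition evec (i : 'I_n) : 'rV[R]_n := delta_mx 0 i.

Definition partial (i : 'I_n) (f : 'rV[R]_n -> R) : 'rV[R]_n -> R :=
  fun x => 'D_(evec i) f x.

Definition grad (f : 'rV[R]_n -> R) (x : 'rV[R]_n) : 'rV[R]_n :=
  \row_i partial i f x.
Definition hess (f : 'rV[R]_n -> R) (x : 'rV[R]_n) : 'M[R]_n :=
  \matrix_(i, j) partial j (partial i f) x.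

Definition C2 (f : 'rV[R]_n -> R) : Prop :=
  (forall x, differentiable f x) /\
  (forall i x, differentiable (partial i f) x) /\
  (forall i j, continuous (partial j (partial i f))).

Definition norm2 (v : 'rV[R]_n) : R := Num.sqrt (\sum_i v 0 i ^+ 2).
Definition norm1 (v : 'rV[R]_n) : R := \sum_i `|v 0 i|.

Definition geps (f : 'rV[R]_n -> R) (lam eg : R) (x : 'rV[R]_n) : 'rV[R]_n :=
  \row_i (let gi := grad f x 0 i in
          if Num.sqrt eg < x 0 i then gi + lam
          else if x 0 i < - Num.sqrt eg then gi - lam
          else gi - Num.min (Num.max (- lam - powR eg (3/4)) gi)
                            (lam + powR eg (3/4))).

Definition Iplus (eg : R) (x : 'rV[R]_n) : pred 'I_n :=
  fun i => Num.sqrt eg < x 0 i.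
Definition Iminus (eg : R) (x : 'rV[R]_n) : pred 'I_n :=
  fun i => x 0 i < - Num.sqrt eg.
Definition Inz (eg : R) (x : 'rV[R]_n) : pred 'I_n :=
  fun i => Iplus eg x i || Iminus eg x i.
Definition I0 (eg : R) (x : 'rV[R]_n) : pred 'I_n :=
  fun i => `|x 0 i| <= Num.sqrt eg.

(* restriction of a vector to an index set (subvector, padded by zeros) *)
Definition restr (J : pred 'I_n) (v : 'rV[R]_n) : 'rV[R]_n :=
  \row_i (if J i then v 0 i else 0).

Definition dotJ (J : pred 'I_n) (g d : 'rV[R]_n) : R :=
  \sum_(i | J i) g 0 i * d 0 i.
Definition quadJ (J : pred 'I_n) (H : 'M[R]_n) (d : 'rV[R]_n) : R :=
  \sum_(i | J i) \sum_(j | J j) d 0 i * H i j * d 0 j.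

Definition tmin (J : pred 'I_n) (x d : 'rV[R]_n) : \bar R :=
  \big[Order.min/+oo%E]_(i | J i) ((- x 0 i / d 0 i)%:E).

Definition Jplus (eg : R) (x d : 'rV[R]_n) : pred 'I_n :=
  fun i => Iplus eg x i && (d 0 i < 0).
Definition Jminus (eg : R) (x d : 'rV[R]_n) : pred 'I_n :=
  fun i => Iminus eg x i && (0 < d 0 i).

End Defs.

(* Main.v *)
Require Import Defs.
From mathcomp Require Import ring lra.
From HB Require Import structures.
From mathcomp Require Import all_boot all_order all_algebra.
From mathcomp Require Import all_classical all_reals all_analysis.
Import Order.TTheory GRing.Theory Num.Theory.
Import numFieldNormedType.Exports.
Local Open Scope ring_scope.

Theorem lemma8 (R : realType) (n : nat) (f : 'rV[R]_n -> R) (LH lam eg : R)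
  (xk dk : 'rV[R]_n) (t : R) :
  0 < lam -> 0 < eg -> eg < 1 ->
  C2 f ->
  (forall x y : 'rV[R]_n,
     f y <= f x + dotJ predT (grad f x) (y - x)
            + 2^-1 * quadJ predT (hess f x) (y - x)
            + LH / 6 * norm2 (y - x) ^+ 3) ->
  (forall i, I0 eg xk i -> dk 0 i = 0) ->
  0 < t ->
  (t%:E <= Order.min (tmin (Jplus eg xk dk) xk dk)
                     (tmin (Jminus eg xk dk) xk dk))%E ->
  let phi := fun x => f x + lam * norm1 x in
  phi (xk + t *: dk) <=
    phi xk + t * dotJ (Inz eg xk) (geps f lam eg xk) (restr (Inz eg xk) dk)
    + 2^-1 * t ^+ 2 * quadJ (Inz eg xk) (hess f xk) (restr (Inz eg xk) dk)
    + LH / 6 * t ^+ 3 * norm2 (restr (Inz eg xk) dk) ^+ 3.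
Proof.
Proof.
move=> lam0 eg0 eg1 _ Hcub HI0 t0 Ht /=.
set D := restr (Inz eg xk) dk.
have D0 : forall i, ~~ Inz eg xk i -> D 0 i = 0.
  by move=> i /negbTE Hi; rewrite /D /restr mxE Hi.
have Dk : forall i, dk 0 i = D 0 i.
  move=> i; rewrite /D /restr mxE; case Hi: (Inz eg xk i) => //.
  apply: HI0; move: Hi; rewrite /Inz /Iplus /Iminus /I0 => /negbT.
  rewrite negb_or -!leNgt => /andP[h1 h2]; rewrite ler_norml.
  by rewrite h2 h1.
clearbody D.
have sumInz : forall F : 'I_n -> R, (forall i, ~~ Inz eg xk i -> F i = 0) ->
    \sum_i F i = \sum_(i | Inz eg xk i) F i.
  move=> F HF; rewrite [RHS]big_mkcond; apply: eq_bigr => i _.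
  by case Hi: (Inz eg xk i) => //; rewrite HF ?Hi.
have yx : xk + t *: dk - xk = t *: dk by rewrite addrC addKr.
have H := Hcub xk (xk + t *: dk); rewrite yx in H.
have Edot : dotJ predT (grad f xk) (t *: dk)
    = t * dotJ (Inz eg xk) (grad f xk) D.
  rewrite /dotJ mulr_sumr -sumInz.
    by apply: eq_bigr => i _; rewrite !mxE Dk; ring.
  by move=> i /D0 ->; rewrite !mulr0.
have Equad : quadJ predT (hess f xk) (t *: dk)
    = t ^+ 2 * quadJ (Inz eg xk) (hess f xk) D.
  rewrite /quadJ mulr_sumr -sumInz.
    apply: eq_bigr => i _; rewrite mulr_sumr -sumInz.
      by apply: eq_bigr => j _; rewrite !mxE !Dk; ring.
    by move=> j /D0 ->; rewrite !mulr0.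
  by move=> i /D0 ->; rewrite big1 ?mulr0 // => j _; rewrite !mul0r.
have Enorm : norm2 (t *: dk) = t * norm2 D.
  rewrite /norm2 (_ : \sum_i _ = t ^+ 2 * \sum_i D 0 i ^+ 2).
    by rewrite sqrtrM ?sqrtr_sqr ?gtr0_norm // sqr_ge0.
  by rewrite mulr_sumr; apply: eq_bigr => i _; rewrite mxE Dk exprMn.
set s := fun i : 'I_n => if Num.sqrt eg < xk 0 i then (1 : R) else -1.
have Enorm1 : norm1 (xk + t *: dk)
    = norm1 xk + t * \sum_(i | Inz eg xk i) s i * D 0 i.
  rewrite /norm1 mulr_sumr -sumInz; last by move=> i /D0 ->; rewrite !mulr0.
  rewrite -big_split; apply: eq_bigr => i _; rewrite !mxE.
  have [tA tB] : (t%:E <= tmin (Jplus eg xk dk) xk dk)%E /\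
                 (t%:E <= tmin (Jminus eg xk dk) xk dk)%E.
    by move: Ht; rewrite le_min => /andP[].
  rewrite /s; case: ifP => hp.
    have xp : 0 < xk 0 i by apply: le_lt_trans hp; exact: sqrtr_ge0.
    have : 0 <= xk 0 i + t * dk 0 i.
      case: (ltP (dk 0 i) 0) => hd.
        have : (t%:E <= (- xk 0 i / dk 0 i)%:E)%E.
          apply: le_trans tA _; apply: bigmin_le_cond.
          by rewrite /Jplus /Iplus hp hd.
        rewrite lee_fin ler_ndivlMr // => h; rewrite -subr_ge0 in h.
        by move: h; rewrite opprK addrC.
      by apply: addr_ge0; [exact: ltW | exact: mulr_ge0 (ltW t0) hd].
    move=> h; rewrite !ger0_norm // ?(ltW xp) // -Dk; transitivity (xk 0 i + t * (1 * dk 0 i)); [ring | reflexivity].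
  case hm: (xk 0 i < - Num.sqrt eg).
    have xn : xk 0 i < 0.
      apply: lt_le_trans hm _; rewrite oppr_le0; exact: sqrtr_ge0.
    have : xk 0 i + t * dk 0 i <= 0.
      case: (ltP 0 (dk 0 i)) => hd.
        have : (t%:E <= (- xk 0 i / dk 0 i)%:E)%E.
          apply: le_trans tB _; apply: bigmin_le_cond.
          by rewrite /Jminus /Iminus hm hd.
        rewrite lee_fin ler_pdivlMr // => h; rewrite -subr_ge0 in h.
        by move: h; rewrite -opprD oppr_ge0.
      rewrite -oppr_ge0 opprD; apply: addr_ge0; first by rewrite oppr_ge0 ltW.
      by rewrite -mulrN; apply: mulr_ge0 (ltW t0) _; rewrite oppr_ge0.
    move=> h; rewrite !ler0_norm // ?(ltW xn) // -Dk; transitivity (- xk 0 i + t * (-1 * dk 0 i)); [ring | reflexivity].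
  have : ~~ Inz eg xk i by rewrite /Inz /Iplus /Iminus hp hm.
  move=> /D0 ->.
  have -> : dk 0 i = 0 by rewrite Dk D0 // /Inz /Iplus /Iminus hp hm.
  by rewrite !mulr0 addr0 /=; rewrite addr0.
have Egeps : dotJ (Inz eg xk) (geps f lam eg xk) D
    = dotJ (Inz eg xk) (grad f xk) D + lam * \sum_(i | Inz eg xk i) s i * D 0 i.
  rewrite /dotJ mulr_sumr -big_split; apply: eq_bigr => i Hi.
  rewrite /geps mxE /s /=; move: Hi; rewrite /Inz /Iplus /Iminus.
  case: ifP => hp /=; first by move=> _; ring.
  by move=> ->; ring.
rewrite Enorm1 Egeps.
rewrite Edot Equad Enorm in H.
move: H; set a := f (xk + t *: dk); set G := dotJ _ (grad f xk) D.
set Q := quadJ _ _ _; set N := norm2 D; set S := \sum_(i | _) _.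
rewrite exprMn => H.
lra.
Qed.
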